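(* Consider the slotted transmission system with persistently backlogged transmitter and transmission policy $P$ described in the context, with loss probability $p\in[0,1)$, feedback delay $d\ge0$ and threshold $\gamma>0$. Suppose the loss process $\{X_k\}$ is ergodic. Then, with $\bar{S}_k:=\frac1k\sum_{i=1}^kS_i$, $$\lim_{k\to\infty}\big|E[\bar{S}_k]-(1-p)\big|\le\frac{1+2d}{\gamma},$$ and $E\big(\frac1k\sum_{i=1}^kQ^r_i\big)<\infty$ for all $k$.
   Context: Time is slotted, slots $k=1,2,\dots$; in each slot exactly one packet is transmitted over a lossy path: the transmitter queue of information packets is assumed to be persistently backlogged, and in slot $k$ either an information packet ($S_k=1$) or a coded packet ($C_k=1$) is sent, with $S_k=1-C_k$, $S_k,C_k\in\{0,1\}$. Erasures: $X_k=1$ if the packet sent in slot $k$ is erased and $0$ otherwise, $X_k\in\{0,1\}$ with $E[X_k]=p$. The virtual receiver queue evolves as $Q^r_{k+1}=[Q^r_k+S_kX_k-C_k(1-X_k)]^+$, where $[x]^+=\max\{x,0\}$. Feedback reaches the transmitter with delay $d$ slots; the transmitter uses the estimate $\hat{Q}^r_k=Q^r_{k-d}+\sum_{j=k-d}^{k-1}(S_jp-C_j(1-p))$ (quantities with non-positive indices are given initial values). Transmission policy $P$ with parameter $\gamma$: $C_k\in\arg\min_{C\in\{0,1\}}(-\hat{Q}^r_k+\gamma)C$, $S_k=1-C_k$. *)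

(* Defs.v *)
From HB Require Import structures.
From mathcomp Require Import all_boot all_order all_algebra.
From mathcomp Require Import all_classical all_reals all_analysis.
Set Implicit Arguments. Unset Strict Implicit. Unset Printing Implicit Defensive.
Import Order.TTheory GRing.Theory Num.Theory.
Local Open Scope classical_set_scope.
Local Open Scope ring_scope.

(* ---------- Pathwise dynamics ----------
   Slots are k = 1,2,...; a sequence u : nat -> _ stores slot k at index k-1.
   x n = X_{n+1} (erasure indicator), c n = C_{n+1}, S_{n+1} = ~~ c n.
   Quantities with non-positive slot index k <= 0 are given initial values:
   Q^r_k = qinit k and C_k = cinit k (S_k = ~~ cinit k) for k <= 0;
   Q^r_1 = q1 is the initial queue value. *)

(* Qr q1 x c n = Q^r_{n+1}, with Q^r_{k+1} = [Q^r_k + S_k X_k - C_k (1-X_k)]^+ *)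
Fixpoint Qr {R : realType} (q1 : R) (x c : nat -> bool) (n : nat) : R :=
  match n with
  | 0 => q1
  | m.+1 => Num.max (Qr q1 x c m + (~~ c m)%:R * (x m)%:R
                      - (c m)%:R * (1 - (x m)%:R)) 0
  end.

Definition Qslot {R : realType} (qinit : int -> R) (q1 : R) (x c : nat -> bool)
  (k : int) : R :=
  if (0 < k)%R then Qr q1 x c (`|k|%N.-1) else qinit k.

Definition Cslot (cinit : int -> bool) (c : nat -> bool) (k : int) : bool :=
  if (0 < k)%R then c (`|k|%N.-1) else cinit k.

Definition Qhat {R : realType} (p : R) (d : nat) (qinit : int -> R)
  (cinit : int -> bool) (q1 : R) (x c : nat -> bool) (k : int) : R :=
  Qslot qinit q1 x c (k - d%:Z)
  + \sum_(i < d) ((~~ Cslot cinit c (k - d%:Z + i%:Z))%:R * p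
                  - (Cslot cinit c (k - d%:Z + i%:Z))%:R * (1 - p)).

(* Policy P with parameter gamma: C_k in argmin_{C in {0,1}} (-hatQ_k + gamma) C,
   for every slot k = n+1 >= 1. *)
Definition policyP {R : realType} (gamma p : R) (d : nat) (qinit : int -> R)
  (cinit : int -> bool) (q1 : R) (x c : nat -> bool) : Prop :=
  forall n : nat, forall C : bool,
    (- Qhat p d qinit cinit q1 x c (n.+1)%:Z + gamma) * (c n)%:R
    <= (- Qhat p d qinit cinit q1 x c (n.+1)%:Z + gamma) * C%:R.

(* cylinder sets of nat -> bool, generating the product sigma-algebra *)
Definition cylinders : set (set (nat -> bool)) :=
  [set A | exists (n : nat) (b : nat -> bool),
           A = [set w | forall i, (i < n)%N -> w i = b i]].

Definition path_of {T : Type} (X : nat -> T -> bool) (t : T) : nat -> bool :=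
  fun n => X n t.

Definition stationary_process {R : realType} {dT : measure_display}
  {T : measurableType dT} (P : probability T R) (X : nat -> T -> bool) : Prop :=
  forall (m n : nat) (b : nat -> bool),
    P [set t | forall i, (i < n)%N -> X (m + i)%N t = b i]
    = P [set t | forall i, (i < n)%N -> X i t = b i].

Definition ergodic_process {R : realType} {dT : measure_display}
  {T : measurableType dT} (P : probability T R) (X : nat -> T -> bool) : Prop :=
  stationary_process P X /\
  forall B : set (nat -> bool),
    <<s cylinders >> B ->
    (forall w, B w <-> B (fun n => w n.+1)) ->
    P (path_of X @^-1` B) = 0%E \/ P (path_of X @^-1` B) = 1%E.

(* Main.v *)
Set Warnings "-all".
Require Import Defs.
From HB Require Import structures.
From mathcomp Require Import all_boot all_order all_algebra.
From mathcomp Require Import all_classical all_reals all_analysis.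
From mathcomp Require Import lra measurable_realfun.
Set Warnings "-all".
Import Order.TTheory GRing.Theory Num.Theory.
Local Open Scope classical_set_scope.
Local Open Scope ring_scope.

Section Det.
Variables (R : realType) (p gamma q1 : R) (d : nat) (qinit : int -> R)
  (cinit : int -> bool) (x c : nat -> bool).
Hypotheses (p0 : 0 <= p) (p1 : p < 1) (g0 : 0 < gamma) (q10 : 0 <= q1)
  (pol : policyP gamma p d qinit cinit q1 x c).

Let q n := Qr q1 x c n.
Ltac mlra := have := p0; have := p1; have := g0; have := q10; lra.

Lemma Qr_step n : q n.+1 = Num.max (q n + (x n)%:R - (c n)%:R) 0.
Proof.
rewrite /q /=; congr (Num.max _ 0).
by case: (c n); case: (x n); rewrite /=; mlra.
Qed.

Lemma q_ge0 n : 0 <= q n.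
Proof. by case: n => [|n] //; rewrite Qr_step le_max lexx orbT. Qed.

Lemma q_lower n : q n + (x n)%:R - (c n)%:R <= q n.+1.
Proof. by rewrite Qr_step le_max lexx. Qed.

Lemma q_upper n : q n.+1 <= q n + 1.
Proof.
rewrite Qr_step ge_max; apply/andP; split.
  by case: (x n); case: (c n) => /=; mlra.
by have := q_ge0 n; mlra.
Qed.

Lemma q_exact n : (c n = false \/ 1 <= q n) -> q n.+1 = q n + (x n)%:R - (c n)%:R.
Proof.
move=> H; rewrite Qr_step; apply/max_idPl.
have := q_ge0 n; case: H => [->|]; case: (x n); case: (c n) => /=; mlra.
Qed.

Lemma q_le_lin n : q n <= q1 + n%:R.
Proof.
elim: n => [|n IH]; first by rewrite /q /= addr0.
by have := q_upper n; rewrite -natr1; mlra.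
Qed.

Lemma Qhat_eq m : Qhat p d qinit cinit q1 x c (m + d).+1%:Z
  = q m + \sum_(i < d) (p - (c (m + i))%:R).
Proof.
rewrite /Qhat.
have -> : (m + d).+1%:Z - d%:Z = m.+1%:Z.
  by rewrite -addn1 -addnA [(d + 1)%N]addnC addnA PoszD addrK addn1.
congr (_ + _).
apply: eq_bigr => i _; rewrite /Cslot -PoszD.
have -> : (0 < Posz (m.+1 + i)) = true by [].
rewrite addSn /=.
by case: (c (m + i)); rewrite /= ?mul1r ?mul0r; mlra.
Qed.

Lemma pol_lt n : Qhat p d qinit cinit q1 x c n.+1%:Z < gamma -> c n = false.
Proof.
move=> H; have := pol n false; rewrite /= mulr0.
case: (c n) => //=; rewrite mulr1; mlra.
Qed.

Lemma pol_gt n : gamma < Qhat p d qinit cinit q1 x c n.+1%:Z -> c n = true.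
Proof.
move=> H; have := pol n true; rewrite /= mulr1.
case: (c n) => //=; rewrite mulr0; mlra.
Qed.

Lemma chain_lower m j :
  q m + \sum_(i < j) ((x (m + i))%:R - (c (m + i))%:R) <= q (m + j).
Proof.
elim: j => [|j IH]; first by rewrite big_ord0 addr0 addn0.
rewrite big_ord_recr /= addnS; have := q_lower (m + j); mlra.
Qed.

Lemma sum_m1 (f : nat -> R) j : (forall i, -1 <= f i) -> - j%:R <= \sum_(i < j) f i.
Proof.
move=> H; have -> : - j%:R = \sum_(i < j) (-1 : R).
  by rewrite sumr_const card_ord mulNrn.
by apply: ler_sum => i _; exact: H.
Qed.

Lemma sum_p1 (f : nat -> R) j : (forall i, f i <= 1) -> \sum_(i < j) f i <= j%:R.
Proof.
move=> H; have -> : j%:R = \sum_(i < j) (1 : R).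
  by rewrite sumr_const card_ord.
by apply: ler_sum => i _; exact: H.
Qed.

Lemma lowerQhat m : Qhat p d qinit cinit q1 x c (m + d).+1%:Z - d%:R <= q (m + d).
Proof.
rewrite Qhat_eq; have := chain_lower m d.
have E : \sum_(i < d) ((x (m + i))%:R - (c (m + i))%:R) =
  \sum_(i < d) (p - (c (m + i))%:R) + \sum_(i < d) ((x (m + i))%:R - p).
  by rewrite -big_split; apply: eq_bigr => i _ /=; mlra.
have := @sum_m1 (fun i => (x (m + i))%:R - p) d.
have H : forall i, -1 <= (fun i => (x (m + i))%:R - p) i.
  by move=> i /=; case: (x (m + i)) => /=; mlra.
move/(_ H); rewrite E; mlra.
Qed.

Hypothesis Hg : 1 + 2 * d%:R < gamma.
Ltac mlra2 := have := p0; have := p1; have := g0; have := q10; have := Hg; lra.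

Lemma exact_after n : (d <= n)%N -> q n.+1 = q n + (x n)%:R - (c n)%:R.
Proof.
move=> dn; apply: q_exact.
case E: (c n); last by left.
right; rewrite leNgt; apply/negP => Hq.
have := lowerQhat (n - d); rewrite subnK // => H.
have : Qhat p d qinit cinit q1 x c n.+1%:Z < gamma.
  have : 0 <= d%:R :> R by [].
  mlra2.
by move=> /pol_lt; rewrite E.
Qed.

Lemma chain_exact m j : (d <= m)%N ->
  q (m + j) = q m + \sum_(i < j) ((x (m + i))%:R - (c (m + i))%:R).
Proof.
move=> dm; elim: j => [|j IH]; first by rewrite big_ord0 addr0 addn0.
rewrite big_ord_recr /= addnS exact_after; last by rewrite (leq_trans dm) ?leq_addr.
rewrite IH; mlra2.
Qed.

Lemma upperQhat m : (d <= m)%N ->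
  q (m + d) <= Qhat p d qinit cinit q1 x c (m + d).+1%:Z + d%:R.
Proof.
move=> dm; rewrite Qhat_eq chain_exact //.
have E : \sum_(i < d) ((x (m + i))%:R - (c (m + i))%:R) =
  \sum_(i < d) (p - (c (m + i))%:R) + \sum_(i < d) ((x (m + i))%:R - p).
  by rewrite -big_split; apply: eq_bigr => i _ /=; mlra2.
have := @sum_p1 (fun i => (x (m + i))%:R - p) d.
have H : forall i, (fun i => (x (m + i))%:R - p) i <= 1.
  by move=> i /=; case: (x (m + i)) => /=; mlra2.
move/(_ H); rewrite E; mlra2.
Qed.

Definition Bq := q1 + 2 * d%:R + gamma + d%:R + 1.

Lemma q_bound n : q n <= Bq.
Proof.
have dpos : 0 <= d%:R :> R by [].
case: (ltnP n (d + d)) => Hn.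
  have := q_le_lin n; have : n%:R <= (d + d)%:R :> R by rewrite ler_nat ltnW.
  rewrite /Bq natrD; mlra2.
rewrite -(subnK Hn); elim: (n - (d + d))%N => [|j IH].
  have := q_le_lin (d + d); rewrite /Bq natrD; mlra2.
rewrite addSn.
have mle : (d <= j + d)%N by rewrite leq_addl.
have -> : (j + (d + d))%N = ((j + d) + d)%N by rewrite addnA.
rewrite -!addnA in IH *; rewrite !addnA in IH *.
case: (lerP (q (j + d + d)) (gamma + d%:R)) => Hq.
  have := q_upper (j + d + d); rewrite /Bq; mlra2.
have Hc : c (j + d + d) = true.
  apply: pol_gt; have := upperQhat (j + d) mle; mlra2.
rewrite exact_after; last by rewrite leq_addl.
rewrite Hc; case: (x _) => /=; mlra2.
Qed.

Lemma sum_abs_le (f : nat -> R) j : (forall i, `|f i| <= 1) ->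
  `|\sum_(i < j) f i| <= j%:R.
Proof.
move=> H; apply: (le_trans (ler_norm_sum _ _ _)).
exact: (@sum_p1 (fun i => `|f i|)).
Qed.

Definition Kq := d%:R + Bq.

Lemma sum_xc_bound k : `|\sum_(i < k) ((x i)%:R - (c i)%:R)| <= Kq.
Proof.
have dpos : 0 <= d%:R :> R by [].
have Hf : forall i, `|(x i)%:R - (c i)%:R : R| <= 1.
  by move=> i; case: (x i); case: (c i); rewrite /= ?subrr ?normr0 ?subr0 ?normr1 ?sub0r ?normrN ?normr1.
have Bq0 : 0 <= Bq by rewrite /Bq; mlra2.
case: (ltnP k d) => Hk.
  have := @sum_abs_le (fun i => (x i)%:R - (c i)%:R) k Hf.
  have : k%:R <= d%:R :> R by rewrite ler_nat ltnW.
  rewrite /Kq; mlra2.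
rewrite -(subnK Hk) addnC big_split_ord /=.
have E := chain_exact d (k - d) (leqnn d).
have -> : \sum_(i < k - d) ((x (d + i))%:R - (c (d + i))%:R) = q (d + (k - d)) - q d.
  rewrite E; mlra2.
apply: (le_trans (ler_normD _ _)).
have := @sum_abs_le (fun i => (x i)%:R - (c i)%:R) d Hf.
have H1 := q_bound (d + (k - d)); have H2 := q_bound d.
have H3 := q_ge0 (d + (k - d)); have H4 := q_ge0 d.
have : `|q (d + (k - d)) - q d| <= Bq.
  by rewrite ler_norml; apply/andP; split; mlra2.
rewrite /Kq; mlra2.
Qed.

End Det.

Lemma esup_le (R : realType) (u : (\bar R)^nat) N (B : \bar R) :
  (forall k, (N <= k)%N -> (u k <= B)%E) -> (limn_esup u <= B)%E.
Proof.
move=> H; rewrite /limn_esup /limf_esup.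
apply: (le_trans (ereal_inf_lbound _)).
  by exists [set k | (N <= k)%N] => //; exists N.
by apply: ub_ereal_sup => _ [k Nk <-]; exact: H.
Qed.

Lemma memb (T : Type) (b : T -> bool) t : (t \in [set t | b t]) = b t.
Proof. by apply/idP/idP; rewrite inE. Qed.

Section Meas.
Variables (R : realType) (dT : measure_display) (T : measurableType dT)
  (P : probability T R).

Lemma mbool (b : T -> bool) : measurable [set t | b t] ->
  measurable_fun setT (fun t => (b t)%:R : R).
Proof.
move=> mb.
have -> : (fun t => (b t)%:R : R) = \1_[set t | b t].
  apply/funext => t; rewrite indicE.
  by rewrite memb.
exact: measurable_realfun.measurable_indic.
Qed.

Lemma int_bool (b : T -> bool) : measurable [set t | b t] ->
  (\int[P]_t ((b t)%:R)%:E = P [set t | b t])%E.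
Proof.
move=> mb.
have -> : (fun t => ((b t)%:R)%:E) = (fun t => (\1_[set t | b t] t : R)%:E).
  apply/funext => t; rewrite indicE.
  by rewrite memb.
by rewrite integral_indic // setIT.
Qed.

Lemma mavg (f : nat -> T -> bool) k (a : R) : (forall i, measurable [set t | f i t]) ->
  measurable_fun setT (fun t => (k%:R)^-1 * \sum_(i < k) (f i t)%:R + a).
Proof.
move=> mf; apply: measurable_realfun.measurable_funD; last exact: measurable_cst.
apply: measurable_realfun.measurable_funM; first exact: measurable_cst.
by apply: measurable_sum => i; exact: mbool.
Qed.

Lemma int_avg (f : nat -> T -> bool) k (a : R) :
  (forall i, measurable [set t | f i t]) -> 0 <= a ->
  (\int[P]_t ((k%:R)^-1 * \sum_(i < k) (f i t)%:R + a)%:E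
   = ((k%:R)^-1 * \sum_(i < k) fine (P [set t | f i t]) + a)%:E)%E.
Proof.
move=> mf a0.
have mS : measurable_fun setT (fun t => (k%:R)^-1 * \sum_(i < k) (f i t)%:R : R).
  apply: measurable_realfun.measurable_funM; first exact: measurable_cst.
  by apply: measurable_sum => i; exact: mbool.
have mS' : measurable_fun setT (fun t => \sum_(i < k) (f i t)%:R : R).
  by apply: measurable_sum => i; exact: mbool.
under eq_integral => t _ do rewrite (@EFinD R).
have S0 : forall t, setT t -> (0 <= ((k%:R)^-1 * \sum_(i < k) (f i t)%:R : R)%:E)%E.
  move=> t _; rewrite lee_fin mulr_ge0 ?invr_ge0 //.
  by apply: sumr_ge0 => i _.
have a0' : forall t, setT t -> (0 <= (cst a%:E : T -> \bar R) t)%E by move=> t _; rewrite lee_fin.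
have mSE : measurable_fun setT (EFin \o (fun t => ((k%:R)^-1 * \sum_(i < k) (f i t)%:R : R))).
  exact/measurable_realfun.measurable_EFinP.
rewrite (ge0_integralD P measurableT S0 mSE a0' (measurable_cst _)).
rewrite integral_cst //.
have -> : (a%:E * P [set: T] = a%:E)%E by rewrite probability_setT mule1.
rewrite EFinD.
congr (_ + _)%E.
under eq_integral => t _ do rewrite (@EFinM R).
have S1 : forall t, setT t -> (0 <= (\sum_(i < k) (f i t)%:R : R)%:E)%E.
  by move=> t _; rewrite lee_fin; apply: sumr_ge0 => i _.
have mSE' : measurable_fun setT (EFin \o (fun t => (\sum_(i < k) (f i t)%:R : R))).
  exact/measurable_realfun.measurable_EFinP.
rewrite (ge0_integralZl_EFin P measurableT S1 mSE'); last by rewrite invr_ge0.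
rewrite EFinM; congr (_ * _)%E.
under eq_integral => t _ do rewrite -(@sumEFin R).
rewrite ge0_integral_sum //; last first.
  by move=> i; apply/measurable_EFinP; exact: mbool.
rewrite -sumEFin; apply: eq_bigr => i _.
rewrite int_bool // fineK //; exact: fin_num_measure.
Qed.

End Meas.

Section Meas2.
Variables (R : realType) (dT : measure_display) (T : measurableType dT)
  (P : probability T R).

Lemma int_avg0 (f : nat -> T -> bool) k :
  (forall i, measurable [set t | f i t]) ->
  (\int[P]_t ((k%:R)^-1 * \sum_(i < k) (f i t)%:R)%:E
   = ((k%:R)^-1 * \sum_(i < k) fine (P [set t | f i t]))%:E)%E.
Proof.
move=> mf; have := @int_avg R dT T P f k 0 mf (lexx 0); rewrite addr0 => <-.
by apply: eq_integral => t _; rewrite addr0.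
Qed.

Lemma mavg0 (f : nat -> T -> bool) k : (forall i, measurable [set t | f i t]) ->
  measurable_fun setT (fun t => (k%:R)^-1 * \sum_(i < k) (f i t)%:R : R).
Proof.
move=> mf; apply: measurable_funM; first exact: measurable_cst.
by apply: measurable_sum => i; exact: mbool.
Qed.

Lemma fcompl (b : T -> bool) : measurable [set t | b t] ->
  fine (P [set t | ~~ b t]) + fine (P [set t | b t]) = 1.
Proof.
move=> mb.
have -> : [set t | ~~ b t] = ~` [set t | b t].
  by apply/seteqP; split => t /=; case: (b t).
rewrite probability_setC //.
have F : P [set t | b t] \is a fin_num by exact: fin_num_measure.
have E : P [set t | b t] = (fine (P [set t | b t]))%:E by rewrite fineK.
rewrite E /=; set r := fine _; lra.
Qed.

End Meas2.

Theorem lemma3 (R : realType) (dT : measure_display) (T : measurableType dT)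
  (P : probability T R) (X : nat -> T -> bool) (p gamma : R) (d : nat)
  (q1 : R) (qinit : int -> R) (cinit : int -> bool) (c : nat -> T -> bool) :
  0 <= p < 1 -> 0 < gamma ->
  (forall n, measurable [set t | X n t]) ->
  (forall n, P [set t | X n t] = p%:E) ->
  ergodic_process P X ->
  0 <= q1 -> (forall k, 0 <= qinit k) ->
  (forall n, measurable [set t | c n t]) ->
  (forall t, policyP gamma p d qinit cinit q1 (fun n => X n t) (fun n => c n t)) ->
  (limn_esup (fun k : nat =>
      `| (\int[P]_t ((k%:R)^-1 * \sum_(i < k) (~~ c i t)%:R)%:E) - (1 - p)%:E |%E)
     <= ((1 + 2 * d%:R) / gamma)%:E)%E
  /\ (forall k : nat,
      (\int[P]_t ((k%:R)^-1
                   * \sum_(i < k) Qr q1 (fun n => X n t) (fun n => c n t) i)%:E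
       < +oo)%E).
Proof.
move=> /andP[p0 p1] g0 mX PX _ q10 _ mc pol.
have dpos : 0 <= d%:R :> R by [].
have mnc : forall i, measurable [set t | ~~ c i t].
  move=> i; have -> : [set t | ~~ c i t] = ~` [set t | c i t].
    by apply/seteqP; split => t /=; case: (c i t).
  exact: measurableC.
pose s k := (k%:R)^-1 * \sum_(i < k) fine (P [set t | ~~ c i t]).
pose v k := (k%:R)^-1 * \sum_(i < k) fine (P [set t | c i t]).
pose u k := (k%:R)^-1 * \sum_(i < k) fine (P [set t | X i t]).
have Es k : (\int[P]_t ((k%:R)^-1 * \sum_(i < k) (~~ c i t)%:R)%:E = (s k)%:E)%E.
  exact: (@int_avg0 R dT T P (fun i t => ~~ c i t) k mnc).
have sv k : (0 < k)%N -> s k + v k = 1.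
  move=> k0; rewrite /s /v -mulrDr -big_split /=.
  have -> : \sum_(i < k) (fine (P [set t | ~~ c i t]) + fine (P [set t | c i t]))
     = \sum_(i < k) (1 : R).
    by apply: eq_bigr => i _; exact: fcompl.
  by rewrite sumr_const card_ord mulVf // pnatr_eq0 -lt0n.
have s0 k : 0 <= s k.
  rewrite /s mulr_ge0 ?invr_ge0 //; apply: sumr_ge0 => i _.
  exact/fine_ge0/measure_ge0.
have v0 k : 0 <= v k.
  rewrite /v mulr_ge0 ?invr_ge0 //; apply: sumr_ge0 => i _.
  exact/fine_ge0/measure_ge0.
have uk k : (0 < k)%N -> u k = p.
  move=> k0; rewrite /u.
  have -> : \sum_(i < k) fine (P [set t | X i t]) = \sum_(i < k) p.
    by apply: eq_bigr => i _; rewrite PX.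
  by rewrite sumr_const card_ord -[p *+ k]mulr_natl mulrA mulVf ?mul1r // pnatr_eq0 -lt0n.
have triv k : `|s k - (1 - p)| <= 1.
  case: k => [|k].
    by rewrite /s big_ord0 mulr0 sub0r normrN ger0_norm; lra.
  have h1 := sv k.+1 (ltn0Sn k); have h2 := s0 k.+1; have h3 := v0 k.+1.
  rewrite ler_norml; apply/andP; split; lra.
have key k : (0 < k)%N -> 1 + 2 * d%:R < gamma ->
    `|s k - (1 - p)| <= Kq R gamma q1 d / k%:R.
  move=> k0 Hg.
  have kr : 0 < k%:R :> R by rewrite ltr0n.
  have K0 : 0 <= Kq R gamma q1 d / k%:R.
    by rewrite divr_ge0 // /Kq /Bq; lra.
  have bnd : forall t, `|\sum_(i < k) ((X i t)%:R - (c i t)%:R)| <= Kq R gamma q1 d :> R.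
    move=> t; exact: (@sum_xc_bound R p gamma q1 d qinit cinit
       (fun n => X n t) (fun n => c n t) p0 p1 g0 q10 (pol t) Hg k).
  have le1 : forall (A C : R), `|A - C| <= Kq R gamma q1 d ->
      (k%:R)^-1 * A <= (k%:R)^-1 * C + Kq R gamma q1 d / k%:R.
    move=> A C; rewrite ler_norml => /andP[h1 h2].
    have : (k%:R)^-1 * (A - C) <= (k%:R)^-1 * Kq R gamma q1 d.
      by apply: ler_wpM2l; rewrite ?invr_ge0.
    rewrite mulrBr [Kq _ _ _ _ / _]mulrC; lra.
  have Iu := @int_avg0 R dT T P (fun i t => X i t) k mX.
  have Iv := @int_avg R dT T P (fun i t => c i t) k _ mc K0.
  have Iv' := @int_avg0 R dT T P (fun i t => c i t) k mc.
  have Iu2 := @int_avg R dT T P (fun i t => X i t) k _ mX K0.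
  have uv : u k <= v k + Kq R gamma q1 d / k%:R.
    rewrite -lee_fin -Iu -Iv; apply: ge0_le_integral => //.
    - move=> t _; rewrite lee_fin mulr_ge0 ?invr_ge0 //.
      by apply: sumr_ge0 => i _.
    - by apply/measurable_EFinP; exact: mavg0.
    - by apply/measurable_EFinP; exact: mavg.
    - move=> t _; rewrite lee_fin; apply: le1.
      by have := bnd t; rewrite sumrB.
  have vu : v k <= u k + Kq R gamma q1 d / k%:R.
    rewrite -lee_fin -Iv' -Iu2; apply: ge0_le_integral => //.
    - move=> t _; rewrite lee_fin mulr_ge0 ?invr_ge0 //.
      by apply: sumr_ge0 => i _.
    - by apply/measurable_EFinP; exact: mavg0.
    - by apply/measurable_EFinP; exact: mavg.
    - move=> t _; rewrite lee_fin; apply: le1.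
      by have := bnd t; rewrite sumrB -normrN opprB.
  have := sv k k0; have := uk k k0 => h1 h2.
  rewrite ler_norml; apply/andP; split; lra.
split.
  case: (lerP gamma (1 + 2 * d%:R)) => Hg.
    apply: (@esup_le R _ 0%N) => k _.
    rewrite Es -EFinB abse_EFin lee_fin (le_trans (triv k)) //.
    by rewrite ler_pdivlMr // mul1r.
  have bpos : 0 < (1 + 2 * d%:R) / gamma.
    by rewrite divr_gt0 //; have : 0 <= d%:R :> R by []; lra.
  have Kb0 : 0 <= Kq R gamma q1 d / ((1 + 2 * d%:R) / gamma).
    by rewrite divr_ge0 ?(ltW bpos) // /Kq /Bq; have : 0 <= d%:R :> R by []; lra.
  apply: (@esup_le R _ (Num.Def.archi_bound (Kq R gamma q1 d / ((1 + 2 * d%:R) / gamma))).+1)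
    => k Nk.
  have k0 : (0 < k)%N by apply: leq_trans Nk.
  rewrite Es -EFinB abse_EFin lee_fin (le_trans (key k k0 Hg)) //.
  have kr : 0 < k%:R :> R by rewrite ltr0n.
  rewrite ler_pdivrMr //; apply: ltW.
  have := archi_boundP Kb0; rewrite ltr_pdivrMr // => h.
  apply: (lt_le_trans h); rewrite [_ * k%:R]mulrC ler_wpM2r ?(ltW bpos) //.
  by rewrite ler_nat ltnW.
move=> k.
have mQ : forall n, measurable_fun setT
    (fun t => Qr q1 (fun n => X n t) (fun n => c n t) n).
  elim => [|n IH]; first exact: measurable_cst.
  have -> : (fun t => Qr q1 (fun n => X n t) (fun n => c n t) n.+1) =
     ((fun t => Qr q1 (fun n => X n t) (fun n => c n t) n + (X n t)%:R - (c n t)%:R)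
       \max (fun _ => 0)).
    by apply/funext => t; exact: (@Qr_step R p gamma q1 (X^~ t) (c^~ t) p0 p1 g0 q10 n).
  apply: measurable_maxr; last exact: measurable_cst.
  apply: measurable_funB; last exact: mbool.
  by apply: measurable_funD => //; exact: mbool.
pose M := (k%:R)^-1 * ((q1 + k%:R) *+ k).
apply: (@le_lt_trans _ _ (M%:E)); last exact: ltry.
have -> : (M%:E = \int[P]_t (cst M%:E) t)%E.
  rewrite integral_cst //.
  by have -> : (M%:E * P [set: T] = M%:E)%E by rewrite probability_setT mule1.
apply: ge0_le_integral => //.
- move=> t _; rewrite lee_fin mulr_ge0 ?invr_ge0 //.
  by apply: sumr_ge0 => i _; exact: (@q_ge0 R p gamma q1 (X^~ t) (c^~ t) p0 p1 g0 q10 i).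
- apply/measurable_EFinP; apply: measurable_funM; first exact: measurable_cst.
  by apply: measurable_sum => i; exact: mQ.
- move=> t _; rewrite lee_fin /M; apply: ler_wpM2l; first by rewrite invr_ge0.
  have -> : (q1 + k%:R) *+ k = \sum_(i < k) (q1 + k%:R) by rewrite sumr_const card_ord.
  apply: ler_sum => i _.
  apply: (le_trans (@q_le_lin R p gamma q1 (X^~ t) (c^~ t) p0 p1 g0 q10 i)).
  by rewrite lerD2l ler_nat ltnW.
Qed.
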